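(* Let $\mathbf p$ be a probability vector in $\mathbb R^k$ with all $p_j>0$, let $p_{\max}=\max_jp_j$, and define $$\alpha_{\min}(\mathbf p)=1-\frac{p_{\max}^{-1/3}}{\sum_{j=1}^kp_j^{2/3}}.$$ Then for every $\alpha\in[\alpha_{\min}(\mathbf p),1]$, $v^*_\alpha(\mathbf p)=\|\mathbf p\|_{2/3}=\big(\sum_jp_j^{2/3}\big)^{3/2}$. Consequently, for every such $\alpha$, the simple regret bound of Algorithm 1, namely $O\big(\sqrt{n/T}\,v^*_\alpha(\mathbf p)\big)$, equals $O\big(\sqrt{n/T}\,\|\mathbf p\|_{2/3}\big)$, the optimal rate of fully active policies, which is also the optimal rate over all policies.
   Context: $v^*_\alpha(\mathbf p)$ denotes the minimum value of $\sum_jp_j/\sqrt{q_j}$ over $\mathbf q\in\mathbb R^k$ with $q_j>0$, $\sum_jq_j=1$, subject to $q_j\ge(1-\alpha)p_j$ for all $j$. Setting: bandit with subpopulations with $n$ treatments, $k$ subpopulations, rewards in $[0,1]$, subpopulation distribution $\mathbf p$ known to the agent; a round is passive if $C_t\sim\mathbf p$ is revealed and active if the agent chooses $C_t$; worst-case simple regret $\sup_{\boldsymbol\nu}\sum_jp_j\mathbb E[\max_i\mu_{i,j}-\mu_{\hat a_j,j}]$ over $T$ rounds. Algorithm 1 (budget $\alpha$, using an anytime minimax-optimal simple-regret bandit subroutine $\mathrm{Alg}_{SR}$ per subpopulation): sample $C_t\sim\mathbf p$ for the first $\lfloor(1-\alpha)T\rfloor$ rounds; then with $c^*$ the unique solution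 of $\sum_j\max((1-\alpha)p_j,cp_j^{2/3})=1$, $q^*_j=\max((1-\alpha)p_j,c^*p_j^{2/3})$, $r_j=(q^*_j-(1-\alpha)p_j)/\alpha$, sample $C_t\sim\mathbf r$ in the remaining rounds; treatments and final recommendations come from the subroutine copy for $C_t$. Its worst-case simple regret is $O(\sqrt{n/T}\,v^*_\alpha(\mathbf p))$ for large $T$. Fully active policies may choose $C_t$ every round; $O$ hides universal constants. *)

(* Defs.v *)
From HB Require Import structures.
From mathcomp Require Import all_boot all_order all_algebra.
From mathcomp Require Import all_classical all_reals all_analysis.
Set Implicit Arguments. Unset Strict Implicit. Unset Printing Implicit Defensive.
Import Order.TTheory GRing.Theory Num.Theory.
Local Open Scope ring_scope.

Definition pos_prob_vector (R : realType) (k : nat) (p : 'I_k -> R) : Prop :=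
  (forall j, 0 < p j) /\ \sum_(j < k) p j = 1.

Definition feasible (R : realType) (k : nat) (alpha : R) (p q : 'I_k -> R) : Prop :=
  (forall j, 0 < q j) /\ \sum_(j < k) q j = 1 /\
  (forall j, (1 - alpha) * p j <= q j).

Definition vobj (R : realType) (k : nat) (p q : 'I_k -> R) : R :=
  \sum_(j < k) p j / Num.sqrt (q j).

Definition is_vstar (R : realType) (k : nat) (alpha : R) (p : 'I_k -> R) (v : R) : Prop :=
  (exists q, feasible alpha p q /\ vobj p q = v) /\
  (forall q, feasible alpha p q -> v <= vobj p q).

Definition pmax (R : realType) (k : nat) (p : 'I_k -> R) : R :=
  \big[Num.max/0]_(j < k) p j.

Definition alpha_min (R : realType) (k : nat) (p : 'I_k -> R) : R :=
  1 - (pmax p) `^ (- (1/3)) / (\sum_(j < k) (p j) `^ (2/3)).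

Definition norm23 (R : realType) (k : nat) (p : 'I_k -> R) : R :=
  (\sum_(j < k) (p j) `^ (2/3)) `^ (3/2).

(* Main.v *)
Require Import Defs.
From HB Require Import structures.
From mathcomp Require Import all_boot all_order all_algebra.
From mathcomp Require Import all_classical all_reals all_analysis.
From mathcomp Require Import ring lra.
Import Order.TTheory GRing.Theory Num.Theory.
Local Open Scope ring_scope.

Lemma pmax_ge (R : realType) (k : nat) (p : 'I_k -> R) j : p j <= pmax p.
Proof. by rewrite /pmax (bigD1 j) //= le_max lexx. Qed.

Lemma pow13 (R : realType) (x : R) (n : nat) : 0 <= x ->
  x `^ (n%:R / 3) = (x `^ (1/3)) ^+ n.
Proof.
move=> x0; rewrite -powR_mulrn ?powR_ge0 // -powRrM; congr (_ `^ _).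
by rewrite mulrC mul1r.
Qed.
Lemma tangent (R : realType) (a r s : R) : 0 < a -> 0 < r -> 0 < s ->
  3 / 2 * (a ^+ 2 * r) - 1 / 2 * (r ^+ 3 * s ^+ 2) <= a ^+ 3 / s.
Proof.
move=> a0 r0 s0.
rewrite ler_pdivlMr //.
have h : 0 <= (r * s - a) ^+ 2 * (r * s + 2 * a).
  apply: mulr_ge0; first exact: sqr_ge0.
  have : 0 < r * s by apply: mulr_gt0.
  lra.
have e : (3 / 2 * (a ^+ 2 * r) - 1 / 2 * (r ^+ 3 * s ^+ 2)) * s =
   a ^+ 3 - 1/2 * ((r * s - a) ^+ 2 * (r * s + 2 * a)) by field; lra.
rewrite e; lra.
Qed.

Lemma main_alg (R : realType) (k : nat) (p a : 'I_k -> R) (alpha r amax : R) :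
  (forall j, 0 < a j) -> (forall j, p j = a j ^+ 3) -> 0 < r ->
  \sum_(j < k) a j ^+ 2 = r ^+ 2 ->
  (forall j, a j <= amax) ->
  (1 - alpha) * (amax * r ^+ 2) <= 1 ->
  is_vstar alpha p (r ^+ 3).
Proof.
move=> a0 pa r0 Sa amx hc.
have r2 : 0 < r ^+ 2 by apply: exprn_gt0.
split.
  exists (fun j => a j ^+ 2 / r ^+ 2); split.
    split; first by move=> j; apply: divr_gt0 => //; apply: exprn_gt0.
    split; first by rewrite -mulr_suml Sa divff // gt_eqF.
    move=> j; rewrite pa ler_pdivlMr //.
    have aj := a0 j; have := amx j => ha.
    have hr := r2.
    case: (lerP (1 - alpha) 0) => hc0.
      have : 0 <= a j ^+ 3 * r ^+ 2 by apply: mulr_ge0; apply: exprn_ge0; lra.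
      have : 0 <= a j ^+ 2 by apply: exprn_ge0; lra.
      nra.
    have h1 : (1 - alpha) * (a j * r ^+ 2) <= 1.
      apply: le_trans hc; apply: ler_wpM2l; first lra.
      apply: ler_wpM2r; lra.
    have e : (1 - alpha) * a j ^+ 3 * r ^+ 2 = a j ^+ 2 * ((1 - alpha) * (a j * r ^+ 2)) by ring.
    rewrite e; have : 0 < a j ^+ 2 by apply: exprn_gt0.
    nra.
  rewrite /vobj.
  have -> : \sum_(j < k) p j / Num.sqrt (a j ^+ 2 / r ^+ 2) = \sum_(j < k) a j ^+ 2 * r.
    apply: eq_bigr => j _.
    rewrite -expr_div_n sqrtr_sqr ger0_norm; last by apply: divr_ge0; [apply: ltW|apply: ltW].
    rewrite pa; have := a0 j => aj; field.
    by rewrite !gt_eqF.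
  rewrite -mulr_suml Sa; ring.
move=> q [q0 [q1 qc]].
rewrite /vobj.
apply: (@le_trans _ _ (\sum_(j < k) (3 / 2 * (a j ^+ 2 * r) - 1 / 2 * (r ^+ 3 * Num.sqrt (q j) ^+ 2)))).
  under eq_bigr => j _ do rewrite sqr_sqrtr ?(ltW (q0 j)) //.
  rewrite big_split /= -mulr_sumr -mulr_suml Sa sumrN -mulr_sumr -mulr_sumr q1.
  by rewrite -exprSr; lra.
apply: ler_sum => j _; rewrite pa; apply: tangent => //.
by rewrite sqrtr_gt0.
Qed.

Theorem lemma6 (R : realType) (k : nat) (p : 'I_k -> R) (alpha : R) :
  pos_prob_vector p ->
  alpha_min p <= alpha -> alpha <= 1 ->
  is_vstar alpha p (norm23 p).
Proof.
move=> [p0 p1] hmin _.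
set a := fun j => p j `^ (1/3).
set S := \sum_(j < k) p j `^ (2/3).
set amax := pmax p `^ (1/3).
have a0 : forall j, 0 < a j by move=> j; apply: powR_gt0.
have pa : forall j, p j = a j ^+ 3.
  move=> j; rewrite /a -pow13 ?ltW // divff ?powRr1 ?ltW //; lra.
have Sa : \sum_(j < k) a j ^+ 2 = S.
  by apply: eq_bigr => j _; rewrite /a -pow13 // ltW.
have [j0 _] : exists j : 'I_k, true.
  case: k p p0 p1 a a0 pa S Sa amax hmin => [|k'] p p0 p1 a a0 pa S Sa amax hmin.
    by move: p1; rewrite big_ord0 => /eqP; rewrite eq_sym oner_eq0.
  by exists ord0.
have S0 : 0 < S.
  rewrite -Sa (bigD1 j0) //=.
  have h1 : 0 < a j0 ^+ 2 by exact: exprn_gt0.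
  have h2 : 0 <= \sum_(i < k | i != j0) a i ^+ 2.
    by apply: sumr_ge0 => i _; apply: exprn_ge0; apply: ltW.
  lra.
set r := Num.sqrt S.
have r0 : 0 < r by rewrite sqrtr_gt0.
have Sr : S = r ^+ 2 by rewrite sqr_sqrtr // ltW.
have amx : forall j, a j <= amax.
  move=> j; apply: ge0_ler_powR; first lra.
  - by rewrite nnegrE ltW.
  - by rewrite nnegrE; apply: (le_trans (ltW (p0 j))); apply: pmax_ge.
  exact: pmax_ge.
have amax0 : 0 < amax by exact: (lt_le_trans (a0 j0) (amx j0)).
have hc : (1 - alpha) * (amax * r ^+ 2) <= 1.
  move: hmin; rewrite /alpha_min powRN -/amax -/S => hmin.
  have e : amax^-1 / S * (amax * r ^+ 2) = 1.
    by rewrite Sr; field; rewrite !gt_eqF.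
  rewrite -e; apply: ler_wpM2r; last lra.
  by apply: mulr_ge0; [apply: ltW | apply: exprn_ge0; apply: ltW].
have -> : norm23 p = r ^+ 3.
  rewrite /norm23 -/S.
  have -> : (3 / 2 : R) = 1 + 2^-1 by field; lra.
  rewrite powRD; last by rewrite gt_eqF // implybT.
  rewrite powRr1 ?ltW // powR12_sqrt ?ltW // -/r Sr; ring.
exact: (@main_alg _ _ _ _ _ _ _ a0 pa r0 (etrans Sa Sr) amx hc).
Qed.
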